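(* Let $A$, $\tilde R$, $D$ and $R$ be real $n\times n$ matrices. If $A$ and $D$ are diagonal and $\tilde R$ is orthogonal, then $$\mathrm{Tr}\left[A R D\tilde R\right]\le \sum_j |d_j|\Big(\sum_i a_i^2 r_{ij}^2\Big)^{1/2},$$ where $a_j$ and $d_j$ are the diagonal entries of $A$ and $D$ respectively and $r_{ij}$ is the $(i,j)$ entry of $R$. *)

(* Defs.v *)
From mathcomp Require Import all_boot all_order all_algebra.
From mathcomp Require Import reals.
Set Implicit Arguments. Unset Strict Implicit. Unset Printing Implicit Defensive.
Import Order.TTheory GRing.Theory Num.Theory.
Local Open Scope ring_scope.

Definition orthogonal_mx (R : realType) (n : nat) (Q : 'M[R]_n) : Prop :=
  Q *m Q^T = 1%:M.

(* Main.v *)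
Require Import Defs.
From mathcomp Require Import all_boot all_order all_algebra.
From mathcomp Require Import reals.
From mathcomp Require Import ring lra.
Import Order.TTheory GRing.Theory Num.Theory.
Local Open Scope ring_scope.

Lemma cs_aux (R : realType) (n : nat) (x y : 'I_n -> R) :
  \sum_(i < n) y i ^+ 2 = 1 ->
  \sum_(i < n) x i * y i <= Num.sqrt (\sum_(i < n) x i ^+ 2).
Proof.
move=> Hy.
set S := \sum_(i < n) x i ^+ 2.
have S0 : 0 <= S by apply: sumr_ge0 => i _; exact: sqr_ge0.
set s := Num.sqrt S.
have s2 : s ^+ 2 = S by rewrite sqr_sqrtr.
have s0 : 0 <= s by exact: sqrtr_ge0.
set c := \sum_(i < n) x i * y i.
have H : 0 <= \sum_(i < n) (x i - s * y i) ^+ 2 by apply: sumr_ge0 => i _; exact: sqr_ge0.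
have E : \sum_(i < n) (x i - s * y i) ^+ 2 = S - 2 * s * c + s ^+ 2.
  rewrite /S /c.
  have -> : s ^+ 2 = s ^+ 2 * \sum_(i < n) y i ^+ 2 by rewrite Hy mulr1.
  rewrite mulr_sumr mulr_sumr -!sumrN -!big_split /=.
  apply: eq_bigr => i _; ring.
rewrite E s2 in H.
have Hsc : s * c <= s ^+ 2 by rewrite s2; lra.
have [sz|sp] := eqVneq s 0.
  have Sz : S = 0 by rewrite -s2 sz expr2 mulr0.
  have xz : forall i, x i = 0.
    move=> i; apply/eqP; rewrite -sqrf_eq0; apply/eqP.
    by apply: (psumr_eq0P (P := predT) _ Sz) => // j _; exact: sqr_ge0.
  rewrite /c big1 ?sz // => i _; by rewrite xz mul0r.
have spos : 0 < s by rewrite lt_def sp s0.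
by rewrite -(ler_pM2l spos) -expr2.
Qed.

Theorem lemma3 (R : realType) (n : nat) (A Rt D Rm : 'M[R]_n) :
  is_diag_mx A -> is_diag_mx D -> orthogonal_mx Rt ->
  \tr (A *m Rm *m D *m Rt) <=
    \sum_(j < n) `|D j j| * Num.sqrt (\sum_(i < n) (A i i) ^+ 2 * (Rm i j) ^+ 2).
Proof.
move=> /is_diag_mxP HA /is_diag_mxP HD HO.
have E : forall j k, (A *m Rm *m D) j k = A j j * Rm j k * D k k.
  move=> j k; rewrite !mxE (bigD1 k) //= big1 ?addr0; last first.
    by move=> l /negbTE lk; rewrite HD ?mulr0 // (inj_eq val_inj) lk.
  rewrite !mxE (bigD1 j) //= big1 ?addr0 //.
  by move=> l lj; rewrite HA ?mul0r // (inj_eq val_inj) eq_sym.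
have T : \tr (A *m Rm *m D *m Rt) =
   \sum_(k < n) D k k * \sum_(j < n) (A j j * Rm j k) * Rt k j.
  rewrite /mxtrace.
  under eq_bigr => j _ do (rewrite mxE; under eq_bigr => k _ do rewrite E).
  rewrite exchange_big /=; apply: eq_bigr => k _; rewrite mulr_sumr.
  by apply: eq_bigr => j _; ring.
rewrite T; apply: ler_sum => k _.
have Hy : \sum_(j < n) Rt k j ^+ 2 = 1.
  have := congr1 (fun M : 'M[R]_n => M k k) HO; rewrite !mxE eqxx /= mulr1n => <-.
  by apply: eq_bigr => j _; rewrite mxE expr2.
have Hy' : \sum_(j < n) (- Rt k j) ^+ 2 = 1.
  by rewrite -Hy; apply: eq_bigr => j _; rewrite sqrrN.
have Hs : Num.sqrt (\sum_(i < n) A i i ^+ 2 * Rm i k ^+ 2) =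
          Num.sqrt (\sum_(i < n) (A i i * Rm i k) ^+ 2).
  by congr Num.sqrt; apply: eq_bigr => i _; rewrite exprMn.
rewrite Hs.
set c := \sum_(j < n) _.
set s := Num.sqrt _.
have h1 : c <= s by exact: (cs_aux _ _ _ _ Hy).
have h2 : - c <= s.
  have := cs_aux _ _ (fun j => A j j * Rm j k) _ Hy'.
  rewrite /c -sumrN; under eq_bigr => j _ do rewrite mulrN; done.
have ac : `|c| <= s by rewrite ler_norml h1 andbT lerNl.
apply: le_trans (ler_norm _) _; rewrite normrM.
by apply: ler_wpM2l => //.
Qed.
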